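(* Let $k\ge1$. For every $\mathcal{C}_k$-algebra $(A,t)$: (i) every cyclic deductive system of $A$ is an intersection of maximal cyclic deductive systems of $A$; (ii) the intersection of all maximal cyclic deductive systems of $A$ equals $\{1\}$. Consequently, (iii) the variety of $\mathcal{C}_k$-algebras is semisimple (every subdirectly irreducible member is simple).
   Context: A modal pseudocomplemented De Morgan algebra ($mpM$-algebra) is an algebra $\langle A,\wedge,\vee,\sim,{}^\ast,0,1\rangle$ such that $\langle A,\wedge,\vee,\sim,0,1\rangle$ is a De Morgan algebra (bounded distributive lattice with $\sim\sim x=x$, $\sim(x\vee y)=\sim x\wedge\sim y$), $x^\ast$ is the pseudocomplement of $x$, and $x\vee\sim x\le x\vee x^\ast$. Put $\nabla x=\sim(\sim x\wedge x^\ast)$, $\triangle x=\sim\nabla\sim x$. A $\mathcal{C}_k$-algebra ($k\ge1$) is a pair $(A,t)$ with $A$ an $mpM$-algebra and $t$ an $mpM$-automorphism of $A$ with $t^k=\mathrm{id}$; these form a variety in the signature $(\wedge,\vee,\sim,{}^\ast,t,0,1)$. The cyclic implication is $a\rightharpoondown b=\bigvee_{i=1}^{k}\nabla(\sim t^i(a))\vee b$. A cyclic deductive system is a set $D\subseteq A$ with $1\in D$ such that $x,\,x\rightharpoondown y\in D$ imply $y\in D$; it is maximal if it is maximal among proper cyclic deductive systems. *)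

(* Defs.v *)
From Stdlib Require Import List Arith.
Import ListNotations.
Set Implicit Arguments.

Record mpM := MpM {
  car :> Type;
  meet : car -> car -> car;
  join : car -> car -> car;
  neg  : car -> car;
  star : car -> car;
  zero : car;
  one  : car;
  meet_assoc : forall x y z, meet x (meet y z) = meet (meet x y) z;
  join_assoc : forall x y z, join x (join y z) = join (join x y) z;
  meet_comm : forall x y, meet x y = meet y x;
  join_comm : forall x y, join x y = join y x;
  meet_absorb : forall x y, meet x (join x y) = x;
  join_absorb : forall x y, join x (meet x y) = x;
  meet_distr : forall x y z, meet x (join y z) = join (meet x y) (meet x z);
  join_zero : forall x, join x zero = x;
  meet_one : forall x, meet x one = x;
  neg_invol : forall x, neg (neg x) = x;
  neg_join : forall x y, neg (join x y) = meet (neg x) (neg y);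
  star_pc : forall x y, meet y x = zero <-> meet y (star x) = y;
  mpM_ax : forall x, meet (join x (neg x)) (join x (star x)) = join x (neg x)
}.

Arguments meet {m}. Arguments join {m}. Arguments neg {m}. Arguments star {m}.

Definition le (A : mpM) (x y : A) : Prop := meet x y = x.

Definition nabla (A : mpM) (x : A) : A := neg (meet (neg x) (star x)).
Arguments nabla {A}.
Definition delta (A : mpM) (x : A) : A := neg (nabla (neg x)).

Arguments delta {A}. Arguments le {A}.

Record CkAlg (k : nat) := CkA {
  alg :> mpM;
  tt : alg -> alg;
  t_meet : forall x y, tt (meet x y) = meet (tt x) (tt y);
  t_join : forall x y, tt (join x y) = join (tt x) (tt y);
  t_neg : forall x, tt (neg x) = neg (tt x);
  t_star : forall x, tt (star x) = star (tt x);
  t_zero : tt (zero alg) = zero alg;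
  t_one : tt (one alg) = one alg;
  t_bij : exists u : alg -> alg, (forall x, u (tt x) = x) /\ (forall x, tt (u x) = x);
  t_period : forall x, Nat.iter k tt x = x
}.

Arguments tt {k c}.

Section Ck.
Variable k : nat.
Variable A : CkAlg k.

Definition tpow (i : nat) (x : A) : A := Nat.iter i (@tt k A) x.

Definition cimp (a b : A) : A :=
  join (fold_right (fun i acc => join (nabla (neg (tpow i a))) acc) (zero A) (seq 1 k)) b.

Definition cyclic_ds (D : A -> Prop) : Prop :=
  D (one A) /\ forall x y, D x -> D (cimp x y) -> D y.

Definition proper (D : A -> Prop) : Prop := exists x, ~ D x.

Definition maximal_cds (D : A -> Prop) : Prop :=
  cyclic_ds D /\ proper D /\
  forall E, cyclic_ds E -> proper E -> (forall x, D x -> E x) -> forall x, E x -> D x.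

Definition congruence (th : A -> A -> Prop) : Prop :=
  (forall x, th x x) /\ (forall x y, th x y -> th y x) /\
  (forall x y z, th x y -> th y z -> th x z) /\
  (forall x x' y y', th x x' -> th y y' -> th (meet x y) (meet x' y')) /\
  (forall x x' y y', th x x' -> th y y' -> th (join x y) (join x' y')) /\
  (forall x x', th x x' -> th (neg x) (neg x')) /\
  (forall x x', th x x' -> th (star x) (star x')) /\
  (forall x x', th x x' -> th (tt x) (tt x')).

Definition nonidentity (th : A -> A -> Prop) : Prop := exists x y, x <> y /\ th x y.

Definition subdirectly_irreducible : Prop :=
  exists a b : A, a <> b /\
    forall th, congruence th -> nonidentity th -> th a b.

Definition simple : Prop :=
  (exists a b : A, a <> b) /\
  forall th, congruence th -> (forall x y, th x y -> x = y) \/ (forall x y, th x y).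

End Ck.

Arguments tpow {k A}. Arguments cimp {k A}. Arguments cyclic_ds {k A}.
Arguments proper {k A}. Arguments maximal_cds {k A}. Arguments congruence {k A}.
Arguments nonidentity {k A}. Arguments subdirectly_irreducible {k}. Arguments simple {k}.

(* Main.v *)
Require Import Defs.
From Stdlib Require Import List Arith Lia Classical.
Import ListNotations.

From mathcomp Require classical_sets.
Lemma zorn_sets (T : Type) (P : (T -> Prop) -> Prop) :
 (forall F : (T->Prop)->Prop, (forall X, F X -> P X) ->
    (forall X Y, F X -> F Y -> (forall z, X z -> Y z) \/ (forall z, Y z -> X z)) ->
    P (fun z => exists2 X, F X & X z)) ->
 exists A, P A /\ forall B, (forall z, A z -> B z) -> P B -> forall z, B z -> A z.
Proof.
intros H.
destruct (@classical_sets.Zorn_bigcup T P) as [A [PA HA]].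
- intros F FP Ftot. apply H; [exact FP| exact Ftot].
- exists A. split; [exact PA|]. intros B AB PB z Bz.
  apply NNPP; intro nA. apply (HA B); [|exact PB].
  split; [exact AB|]. intro BA. exact (nA (BA z Bz)).
Qed.

Section Lat.
Variable A : mpM.
Implicit Types x y z u v w a b c d p q : A.
Definition mA x y z : meet x (meet y z) = meet (meet x y) z := meet_assoc A x y z.
Definition jA x y z : join x (join y z) = join (join x y) z := join_assoc A x y z.
Definition mC x y : meet x y = meet y x := meet_comm A x y.
Definition jC x y : join x y = join y x := join_comm A x y.
Definition mAb x y : meet x (join x y) = x := meet_absorb A x y.
Definition jAb x y : join x (meet x y) = x := join_absorb A x y.
Definition mD x y z : meet x (join y z) = join (meet x y) (meet x z) := meet_distr A x y z.
Definition jZ x : join x (zero A) = x := join_zero A x.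
Definition mO x : meet x (one A) = x := meet_one A x.
Definition nI x : neg (neg x) = x := neg_invol A x.
Definition nJ x y : neg (join x y) = meet (neg x) (neg y) := neg_join A x y.
Definition spc x y : meet y x = zero A <-> meet y (star x) = y := star_pc A x y.
Definition mpax x : meet (join x (neg x)) (join x (star x)) = join x (neg x) := mpM_ax A x.

Lemma meet_idem x : meet x x = x.
Proof. transitivity (meet x (join x (meet x x))). rewrite jAb; reflexivity. apply mAb. Qed.
Lemma join_idem x : join x x = x.
Proof. transitivity (join x (meet x (join x x))). rewrite mAb; reflexivity. apply jAb. Qed.

Lemma le_refl x : le x x. Proof. apply meet_idem. Qed.
Lemma le_trans x y z : le x y -> le y z -> le x z.
Proof. unfold le; intros H1 H2. rewrite <- H1, <- mA, H2. reflexivity. Qed.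
Lemma le_antisym x y : le x y -> le y x -> x = y.
Proof. unfold le; intros H1 H2. rewrite <- H1, mC. exact H2. Qed.
Lemma meet_lb1 x y : le (meet x y) x.
Proof. unfold le. rewrite (mC x y), <- mA, meet_idem. reflexivity. Qed.
Lemma meet_lb2 x y : le (meet x y) y.
Proof. unfold le. rewrite <- mA, meet_idem. reflexivity. Qed.
Lemma meet_glb x y z : le z x -> le z y -> le z (meet x y).
Proof. unfold le; intros H1 H2. rewrite mA, H1, H2. reflexivity. Qed.
Lemma join_ub1 x y : le x (join x y).
Proof. apply mAb. Qed.
Lemma join_ub2 x y : le y (join x y).
Proof. rewrite jC. apply mAb. Qed.
Lemma meet_distr_r x y z : meet (join y z) x = join (meet y x) (meet z x).
Proof. rewrite mC, mD, (mC x y), (mC x z). reflexivity. Qed.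
Lemma join_lub x y z : le x z -> le y z -> le (join x y) z.
Proof. unfold le; intros H1 H2. rewrite meet_distr_r, H1, H2. reflexivity. Qed.

Lemma le_join_eq x y : le x y -> join x y = y.
Proof. unfold le; intro H. rewrite <- H, jC, mC. apply jAb. Qed.
Lemma join_eq_le x y : join x y = y -> le x y.
Proof. unfold le; intro H. rewrite <- H. apply mAb. Qed.

Lemma le_zero x : le (zero A) x.
Proof. apply join_eq_le. rewrite jC. apply jZ. Qed.
Lemma le_one x : le x (one A).
Proof. apply mO. Qed.

Lemma le_trans_meet1 x y z : le x z -> le (meet x y) z.
Proof. intro; eapply le_trans; [apply meet_lb1| assumption]. Qed.
Lemma le_trans_meet2 x y z : le y z -> le (meet x y) z.
Proof. intro; eapply le_trans; [apply meet_lb2| assumption]. Qed.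
Lemma le_trans_join1 x y z : le z x -> le z (join x y).
Proof. intro; eapply le_trans; [eassumption|apply join_ub1]. Qed.
Lemma le_trans_join2 x y z : le z y -> le z (join x y).
Proof. intro; eapply le_trans; [eassumption|apply join_ub2]. Qed.

Lemma distr_le x y z : le (meet x (join y z)) (join (meet x y) (meet x z)).
Proof. rewrite mD. apply le_refl. Qed.
Lemma join_distr x y z : join x (meet y z) = meet (join x y) (join x z).
Proof.
  apply le_antisym.
  - apply join_lub. apply meet_glb; apply join_ub1.
    apply meet_glb; [apply le_trans_join2, meet_lb1|apply le_trans_join2, meet_lb2].
  - eapply le_trans. apply distr_le.
    apply join_lub. apply le_trans_meet2, join_ub1.
    rewrite mC. eapply le_trans. apply distr_le.
    apply join_lub. apply le_trans_meet2, join_ub1.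
    rewrite mC. apply le_trans_join2, le_refl.
Qed.
Lemma distr_le2 x y z : le (meet (join x y) (join x z)) (join x (meet y z)).
Proof. rewrite join_distr. apply le_refl. Qed.

Lemma meet_zero x : meet x (zero A) = zero A.
Proof. rewrite mC. apply le_zero. Qed.
Lemma join_one x : join x (one A) = one A.
Proof. apply le_join_eq, le_one. Qed.

Lemma neg_meet x y : neg (meet x y) = join (neg x) (neg y).
Proof. rewrite <- (nI (join (neg x) (neg y))), nJ, !nI. reflexivity. Qed.
Lemma neg_anti x y : le x y -> le (neg y) (neg x).
Proof. intro H. apply le_join_eq in H. unfold le. rewrite <- H, nJ, mC. rewrite mA, meet_idem. reflexivity. Qed.
Lemma neg_anti' x y : le (neg x) (neg y) -> le y x.
Proof. intro H. apply neg_anti in H. rewrite !nI in H. exact H. Qed.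
Lemma neg_one : neg (one A) = zero A.
Proof. apply le_antisym; [|apply le_zero]. apply neg_anti'. rewrite nI. apply le_one. Qed.
Lemma neg_zero : neg (zero A) = one A.
Proof. rewrite <- neg_one, nI. reflexivity. Qed.
Lemma neg_inj x y : neg x = neg y -> x = y.
Proof. intro H. rewrite <- (nI x), H, nI. reflexivity. Qed.

Lemma star_meet x : meet x (star x) = zero A.
Proof. rewrite mC. apply (proj2 (spc x (star x))). apply le_refl. Qed.
Lemma le_star x y : meet y x = zero A -> le y (star x).
Proof. apply spc. Qed.
Lemma star_anti x y : le x y -> le (star y) (star x).
Proof. intro H. apply le_star. apply le_antisym; [|apply le_zero].
  apply le_trans with (meet y (star y)); [|rewrite star_meet; apply le_refl].
  apply meet_glb. apply le_trans_meet2. exact H. apply meet_lb1. Qed.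
Lemma star_zero : star (zero A) = one A.
Proof. apply le_antisym. apply le_one. apply le_star. apply meet_zero. Qed.

Lemma modal_le x : le (join x (neg x)) (join x (star x)).
Proof. unfold le. rewrite mC. rewrite mC. apply mpax. Qed.
Lemma modal_dual x : le (meet (neg x) (neg (star x))) x.
Proof. pose proof (neg_anti _ _ (modal_le x)) as H. rewrite !nJ in H.
  eapply le_trans. exact H. rewrite nI. apply meet_lb2. Qed.

Definition comp x := join x (neg x) = one A /\ meet x (neg x) = zero A.
Definition Dl x := meet x (star (neg x)).

Lemma Dl_le x : le (Dl x) x. Proof. apply meet_lb1. Qed.
Lemma Dl_mono x y : le x y -> le (Dl x) (Dl y).
Proof. intro H. apply meet_glb. apply le_trans_meet1; exact H.
  apply le_trans_meet2, star_anti, neg_anti, H. Qed.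
Lemma pc_zero a b c : le a (star b) -> le c b -> le (meet a c) (zero A).
Proof. intros H1 H2. apply le_trans with (meet b (star b)); [|rewrite star_meet; apply le_refl].
  apply meet_glb; [apply le_trans_meet2, H2|apply le_trans_meet1, H1]. Qed.
Lemma zero_of_le a : le a (zero A) -> a = zero A.
Proof. intro H. apply le_antisym; [exact H|apply le_zero]. Qed.
Lemma Dl_meet x y : le (meet (Dl x) (Dl y)) (Dl (meet x y)).
Proof. unfold Dl. apply meet_glb. apply meet_glb.
  apply le_trans_meet1, meet_lb1. apply le_trans_meet2, meet_lb1.
  apply le_star. rewrite neg_meet, mD. apply zero_of_le. apply join_lub.
  - apply pc_zero with (neg x). apply le_trans_meet1, meet_lb2. apply le_refl.
  - apply pc_zero with (neg y). apply le_trans_meet2, meet_lb2. apply le_refl.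
Qed.

Lemma le_meet_mono a b c d : le a b -> le c d -> le (meet a c) (meet b d).
Proof. intros; apply meet_glb; [apply le_trans_meet1|apply le_trans_meet2]; assumption. Qed.
Lemma le_join_mono a b c d : le a b -> le c d -> le (join a c) (join b d).
Proof. intros; apply join_lub; [apply le_trans_join1|apply le_trans_join2]; assumption. Qed.
Lemma one_of_le a : le (one A) a -> a = one A.
Proof. intro H. apply le_antisym; [apply le_one|exact H]. Qed.

Lemma comp_Dl z : comp (Dl z).
Proof.
  unfold comp, Dl. set (p := star (neg z)).
  assert (H1 : join z (neg p) = one A).
  { rewrite <- (nI z) at 1. rewrite <- neg_meet. unfold p. rewrite star_meet. apply neg_zero. }
  assert (H2 : le z (join (neg z) p)).
  { eapply le_trans; [|apply (modal_le (neg z))]. rewrite nI. apply join_ub2. }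
  split.
  - apply one_of_le. rewrite <- H1. rewrite neg_meet. apply join_lub.
    + apply le_trans with (meet z (join (neg z) p)). apply meet_glb; [apply le_refl|exact H2].
      eapply le_trans. apply distr_le. apply join_lub.
      * apply le_trans_join2, le_trans_join1, meet_lb2.
      * apply le_trans_join1, le_refl.
    + apply le_trans_join2, join_ub2.
  - apply zero_of_le. rewrite neg_meet. eapply le_trans. apply distr_le. apply join_lub.
    + apply pc_zero with (neg z). apply le_trans_meet2, le_refl. apply le_refl.
    + apply le_trans with (meet p (neg z)).
      * apply meet_glb. apply le_trans_meet1, meet_lb2.
        eapply le_trans; [|apply (modal_dual (neg z))]. rewrite nI.
        apply meet_glb. apply le_trans_meet1, meet_lb1. apply meet_lb2.
      * apply pc_zero with (neg z). apply le_refl. apply le_refl.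
Qed.

Lemma comp_neg b : comp b -> comp (neg b).
Proof. unfold comp; intros [H1 H2]. rewrite nI. split; [rewrite jC|rewrite mC]; assumption. Qed.
Lemma comp_join a b : comp a -> comp b -> comp (join a b).
Proof. unfold comp; intros [Ha1 Ha2] [Hb1 Hb2]. split.
  - apply one_of_le. rewrite nJ, join_distr. apply meet_glb.
    + rewrite <- Ha1. apply le_join_mono. apply join_ub1. apply le_refl.
    + rewrite <- Hb1. apply le_join_mono. apply join_ub2. apply le_refl.
  - apply zero_of_le. rewrite nJ, meet_distr_r. apply join_lub.
    + rewrite <- Ha2. apply le_meet_mono. apply le_refl. apply meet_lb1.
    + rewrite <- Hb2. apply le_meet_mono. apply le_refl. apply meet_lb2.
Qed.
Lemma comp_meet a b : comp a -> comp b -> comp (meet a b).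
Proof. intros Ha Hb. pose proof (comp_join _ _ (comp_neg _ Ha) (comp_neg _ Hb)) as H.
  apply comp_neg in H. rewrite nJ, !nI in H. exact H. Qed.
Lemma comp_zero : comp (zero A).
Proof. unfold comp. rewrite neg_zero. split. rewrite jC; apply jZ. apply mO. Qed.
Lemma comp_one : comp (one A).
Proof. pose proof (comp_neg _ comp_zero) as H. rewrite neg_zero in H. exact H. Qed.

Lemma comp_star b : comp b -> star (neg b) = b.
Proof. intros [H1 H2]. apply le_antisym.
  - apply le_trans with (meet (star (neg b)) (join b (neg b))). rewrite H1, mO; apply le_refl.
    rewrite mD. apply join_lub. apply meet_lb2.
    apply le_trans with (zero A). apply pc_zero with (neg b); apply le_refl. apply le_zero.
  - apply le_star. exact H2.
Qed.

Lemma Dl_comp b : comp b -> Dl b = b.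
Proof. intro H. unfold Dl. rewrite comp_star by exact H. apply meet_idem. Qed.
Lemma Dl_one : Dl (one A) = one A.
Proof. apply Dl_comp, comp_one. Qed.

Lemma identA x y : le (meet x (neg x)) (join y (star y)).
Proof.
  set (v := meet x y).
  apply le_trans with (meet x (join v (star v))).
  - apply meet_glb. apply meet_lb1. eapply le_trans; [|apply modal_le].
    apply le_trans_meet2, le_trans_join2, neg_anti, meet_lb1.
  - eapply le_trans. apply distr_le. apply le_join_mono.
    + apply le_trans_meet2, meet_lb2.
    + apply le_star. apply zero_of_le. rewrite <- mA.
      apply le_trans with (meet v (star v)). apply meet_glb. apply meet_glb. apply meet_lb1. apply le_trans_meet2, meet_lb2.
      apply le_trans_meet2, meet_lb1. rewrite star_meet; apply le_refl.
Qed.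

Lemma le_Dl_split x : le x (join (Dl x) (meet x (neg x))).
Proof.
  apply le_trans with (meet x (join (neg x) (star (neg x)))).
  - apply meet_glb. apply le_refl. eapply le_trans; [|apply modal_le]. rewrite nI. apply join_ub2.
  - eapply le_trans. apply distr_le. rewrite jC. apply le_refl.
Qed.

Lemma le_of_Dl x y : le (Dl x) y -> meet x (star y) = zero A -> le x y.
Proof. intros H1 H2. eapply le_trans. apply le_Dl_split. apply join_lub. exact H1.
  apply le_trans with (meet x (join y (star y))). apply meet_glb. apply meet_lb1. apply identA.
  eapply le_trans. apply distr_le. apply join_lub. apply meet_lb2. rewrite H2. apply le_zero. Qed.

Lemma comp_absorb b y : comp b -> meet b (join (neg b) y) = meet b y.
Proof. intros [_ H]. rewrite mD, H, jC, jZ. reflexivity. Qed.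
Lemma comp_absorb' b y : comp b -> join (neg b) (meet b y) = join (neg b) y.
Proof. intros [H _]. rewrite join_distr, jC, H, mC, mO. reflexivity. Qed.
Lemma comp_le_join b y : comp b -> le b y -> join (neg b) y = one A.
Proof. intros [H _] Hb. apply one_of_le. rewrite <- H, jC. apply le_join_mono; [apply le_refl|exact Hb]. Qed.
Lemma comp_join_le b y : comp b -> join (neg b) y = one A -> le b y.
Proof. intros Hc H. unfold le. rewrite <- (comp_absorb _ _ Hc), H, mO. reflexivity.
Qed.

Lemma star_comp_meet x b : comp b -> meet (star x) b = meet (star (meet x b)) b.
Proof. intros [_ H]. apply le_antisym.
  - apply meet_glb; [|apply meet_lb2]. apply le_star. apply zero_of_le.
    apply le_trans with (meet x (star x)). apply meet_glb. apply le_trans_meet2, meet_lb1. apply le_trans_meet1, meet_lb1.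
    rewrite star_meet; apply le_refl.
  - apply meet_glb; [|apply meet_lb2]. apply le_star. apply zero_of_le.
    apply le_trans with (meet (meet x b) (star (meet x b))). apply meet_glb. apply meet_glb. apply meet_lb2. apply le_trans_meet1, meet_lb2.
    apply le_trans_meet1, meet_lb1. rewrite star_meet; apply le_refl.
Qed.
Lemma neg_comp_meet x b : comp b -> meet (neg x) b = meet (neg (meet x b)) b.
Proof. intros [_ H]. rewrite neg_meet, meet_distr_r, (mC (neg b) b), H, jZ. reflexivity. Qed.
End Lat.
Arguments comp {A} x.
Arguments Dl {A} x.
Set Implicit Arguments.

Section Ck2.
Variable k : nat.
Variable A : CkAlg k.
Implicit Types x y z u v w a b : A.

Definition J (l : list nat) (a : A) : A :=
  fold_right (fun i acc => join (nabla (neg (tpow i a))) acc) (zero A) l.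
Definition cJ a := J (seq 1 k) a.
Definition cc a := neg (cJ a).
Definition Fx u := comp u /\ tt u = u.

Lemma cimp_eq a b : cimp a b = join (cJ a) b.
Proof. reflexivity. Qed.

Lemma nabla_neg z : nabla (neg z) = neg (Dl z).
Proof. unfold nabla, Dl. rewrite nI. reflexivity. Qed.

Lemma tpow_S i x : tpow (S i) x = tt (tpow i x).
Proof. reflexivity. Qed.
Lemma tpow_meet i x y : tpow i (meet x y) = meet (tpow i x) (tpow i y).
Proof. induction i; [reflexivity|]. rewrite !tpow_S, IHi. apply t_meet. Qed.
Lemma tpow_one i : tpow i (one A) = one A.
Proof. induction i; [reflexivity|]. rewrite tpow_S, IHi. apply t_one. Qed.
Lemma tt_mono x y : le x y -> le (tt x) (tt y).
Proof. unfold le. intro H. rewrite <- t_meet, H. reflexivity. Qed.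
Lemma tpow_mono i x y : le x y -> le (tpow i x) (tpow i y).
Proof. intro H. induction i; [exact H|]. rewrite !tpow_S. apply tt_mono, IHi. Qed.
Lemma tpow_comm i x : tpow i (tt x) = tt (tpow i x).
Proof. induction i; [reflexivity|]. rewrite !tpow_S, IHi. reflexivity. Qed.
Lemma tpow_k x : tpow k x = x.
Proof. apply t_period. Qed.
Lemma tpow_fix i u : tt u = u -> tpow i u = u.
Proof. intro H. induction i; [reflexivity|]. rewrite tpow_S, IHi. exact H. Qed.

Lemma t_nabla z : tt (nabla (neg z)) = nabla (neg (tt z)).
Proof. unfold nabla. rewrite t_neg, t_meet, t_star, !t_neg. reflexivity. Qed.

Lemma J_ub l i a : In i l -> le (neg (Dl (tpow i a))) (J l a).
Proof. induction l as [|j l IH]; simpl; [tauto|]. intros [<-|H].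
  - rewrite nabla_neg. apply join_ub1.
  - apply le_trans_join2, IH, H. Qed.
Lemma J_lub l a u : (forall i, In i l -> le (neg (Dl (tpow i a))) u) -> le (J l a) u.
Proof. induction l as [|j l IH]; simpl; intro H; [apply le_zero|].
  apply join_lub. rewrite nabla_neg. apply H; left; reflexivity.
  apply IH. intros i Hi; apply H; right; exact Hi. Qed.
Lemma J_comp l a : comp (J l a).
Proof. induction l as [|j l IH]; simpl; [apply comp_zero|].
  apply comp_join; [|exact IH]. rewrite nabla_neg. apply comp_neg, comp_Dl. Qed.
Lemma J_t l a u : (forall i, In i l -> le (neg (Dl (tpow (S i) a))) u) -> le (tt (J l a)) u.
Proof. induction l as [|j l IH]; simpl; intro H; [rewrite t_zero; apply le_zero|].
  rewrite t_join. apply join_lub. rewrite t_nabla, nabla_neg. apply H; left; reflexivity.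
  apply IH. intros i Hi; apply H; right; exact Hi. Qed.

Lemma In_seq_k : 1 <= k -> In k (seq 1 k).
Proof. intro. apply in_seq. lia. Qed.

Lemma cc_le : 1 <= k -> forall a, le (cc a) a.
Proof. intros hk a. unfold cc. apply neg_anti'. rewrite nI.
  eapply le_trans; [|apply (J_ub _ _ a (In_seq_k hk))]. rewrite tpow_k. apply neg_anti, Dl_le. Qed.
Lemma cc_comp a : comp (cc a).
Proof. apply comp_neg, J_comp. Qed.
Lemma cJ_one : cJ (one A) = zero A.
Proof. apply zero_of_le. apply J_lub. intros i _. rewrite tpow_one, Dl_one, neg_one. apply le_refl. Qed.
Lemma cc_one : cc (one A) = one A.
Proof. unfold cc. rewrite cJ_one. apply neg_zero. Qed.
Lemma cc_meet a b : le (meet (cc a) (cc b)) (cc (meet a b)).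
Proof. unfold cc. rewrite <- nJ. apply neg_anti. apply J_lub. intros i Hi.
  rewrite tpow_meet. eapply le_trans. apply neg_anti, Dl_meet. rewrite neg_meet.
  apply le_join_mono; apply J_ub; exact Hi. Qed.
Lemma cc_mono a b : le a b -> le (cc a) (cc b).
Proof. intro H. unfold cc. apply neg_anti. apply J_lub. intros i Hi.
  eapply le_trans; [|apply (J_ub _ _ a Hi)]. apply neg_anti, Dl_mono, tpow_mono, H. Qed.

Lemma tt_cJ a : tt (cJ a) = cJ a.
Proof.
  assert (H : le (tt (cJ a)) (cJ a)).
  { apply J_t. intros i Hi. apply in_seq in Hi.
    destruct (Nat.eq_dec i k) as [->|Hne].
    - rewrite tpow_S, tpow_k. apply (J_ub (seq 1 k) 1 a). apply in_seq. lia.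
    - apply J_ub. apply in_seq. lia. }
  apply le_antisym; [exact H|].
  assert (H2 : forall n, le (tpow n (cJ a)) (cJ a)).
  { induction n; [apply le_refl|]. rewrite tpow_S, <- tpow_comm.
    eapply le_trans; [|exact IHn]. apply tpow_mono, H. }
  assert (H3 : forall n, n <> 0 -> le (tpow n (cJ a)) (tt (cJ a))).
  { intros [|n] Hn; [congruence|]. rewrite tpow_S. apply tt_mono, H2. }
  destruct (Nat.eq_dec k 0) as [E|E].
  - assert (Hs : seq 1 k = []) by (rewrite E; reflexivity). unfold cJ. rewrite Hs. simpl. rewrite t_zero. apply le_refl.
  - rewrite <- (tpow_k (cJ a)) at 1. apply H3, E.
Qed.

Lemma tt_cc a : tt (cc a) = cc a.
Proof. unfold cc. rewrite t_neg, tt_cJ. reflexivity. Qed.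
Lemma Fx_cc a : Fx (cc a).
Proof. split; [apply cc_comp|apply tt_cc]. Qed.
Lemma Fx_neg u : Fx u -> Fx (neg u).
Proof. intros [H1 H2]. split; [apply comp_neg, H1|rewrite t_neg, H2; reflexivity]. Qed.
Lemma Fx_meet u v : Fx u -> Fx v -> Fx (meet u v).
Proof. intros [H1 H2] [H3 H4]. split; [apply comp_meet; assumption|rewrite t_meet, H2, H4; reflexivity]. Qed.
Lemma Fx_join u v : Fx u -> Fx v -> Fx (join u v).
Proof. intros [H1 H2] [H3 H4]. split; [apply comp_join; assumption|rewrite t_join, H2, H4; reflexivity]. Qed.
Lemma Fx_one : Fx (one A).
Proof. split; [apply comp_one|apply t_one]. Qed.
Lemma Fx_zero : Fx (zero A).
Proof. split; [apply comp_zero|apply t_zero]. Qed.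

Lemma cc_fix : 1 <= k -> forall u, Fx u -> cc u = u.
Proof. intros hk u [Hc Ht]. unfold cc.
  assert (E : cJ u = neg u).
  { apply le_antisym.
    - apply J_lub. intros i _. rewrite (tpow_fix i Ht), (Dl_comp _ _ Hc). apply le_refl.
    - pose proof (J_ub _ _ u (In_seq_k hk)) as H. rewrite tpow_k, (Dl_comp _ _ Hc) in H. exact H. }
  rewrite E. apply nI. Qed.

Definition filt (D : A -> Prop) : Prop :=
  D (one A) /\ (forall x y, D x -> le x y -> D y) /\
  (forall x y, D x -> D y -> D (meet x y)) /\ (forall x, D x -> D (cc x)).

Lemma cds_filt : 1 <= k -> forall D, cyclic_ds D -> filt D.
Proof.
  intros hk D [H1 MP].
  assert (Hup : forall x y, D x -> le x y -> D y).
  { intros x y Hx Hxy. apply (MP x y Hx). rewrite cimp_eq.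
    assert (E : join (cJ x) y = one A).
    { rewrite <- (nI _ (cJ x)). apply comp_le_join. apply cc_comp. eapply le_trans; [apply cc_le, hk|exact Hxy]. }
    rewrite E. exact H1. }
  assert (Hc : forall x, D x -> D (cc x)).
  { intros x Hx. apply (MP x _ Hx). rewrite cimp_eq. unfold cc. destruct (J_comp (seq 1 k) x) as [E _].
    unfold cJ. rewrite E. exact H1. }
  split; [exact H1|]. split; [exact Hup|]. split; [|exact Hc].
  intros x y Hx Hy.
  apply Hup with (meet (cc x) (cc y)).
  - apply (MP x _ Hx). rewrite cimp_eq. rewrite <- (nI _ (cJ x)). fold (cc x).
    rewrite (comp_absorb' _ _ (cc y) (cc_comp x)). apply Hup with (cc y). apply Hc, Hy. apply join_ub2.
  - apply le_meet_mono; apply cc_le, hk.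
Qed.

Lemma filt_cds : 1 <= k -> forall D, filt D -> cyclic_ds D.
Proof.
  intros hk D [H1 [Hup [Hm Hc]]]. split; [exact H1|].
  intros x y Hx Hi. rewrite cimp_eq in Hi.
  apply Hup with (meet (cc x) y); [|apply meet_lb2].
  rewrite <- (comp_absorb _ _ y (cc_comp x)). unfold cc at 2. rewrite nI.
  apply Hm; [apply Hc, Hx|exact Hi].
Qed.

Lemma filt_proper D : filt D -> proper D -> ~ D (zero A).
Proof. intros [_ [Hup _]] [x Hx] H0. apply Hx, (Hup _ _ H0), le_zero. Qed.

Lemma union_cds (D X : A -> Prop) : cyclic_ds X -> (forall z, D z -> X z) -> cyclic_ds (fun z => D z \/ X z).
Proof. intros [H1 MP] HDX. split; [right; exact H1|]. intros a b Ha Hab. right.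
  apply (MP a b); [destruct Ha; auto|destruct Hab; auto]. Qed.

Lemma extend : 1 <= k -> forall (D : A -> Prop) x, cyclic_ds D -> ~ D x ->
  exists M, maximal_cds M /\ (forall z, D z -> M z) /\ ~ M x.
Proof.
  intros hk D x HD nDx.
  pose (P := fun X : A -> Prop => cyclic_ds (fun z => D z \/ X z) /\ ~ X x).
  destruct (zorn_sets _ P) as [A0 [[HA0c HA0x] HA0max]].
  - intros F FP Ftot. split.
    + destruct HD as [HD1 MPD]. split; [left; exact HD1|].
      intros a b Ha Hab.
      destruct Ha as [Ha|[X FX Xa]]; destruct Hab as [Hab|[Y FY Yab]].
      * left; exact (MPD a b Ha Hab).
      * destruct (FP Y FY) as [[_ MPY] _].
        destruct (MPY a b (or_introl Ha) (or_intror Yab)) as [Hb|Hb]; [left; exact Hb|right; exists Y; assumption].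
      * destruct (FP X FX) as [[_ MPX] _].
        destruct (MPX a b (or_intror Xa) (or_introl Hab)) as [Hb|Hb]; [left; exact Hb|right; exists X; assumption].
      * destruct (Ftot X Y FX FY) as [XY|YX].
        -- destruct (FP Y FY) as [[_ MPY] _].
           destruct (MPY a b (or_intror (XY a Xa)) (or_intror Yab)) as [Hb|Hb]; [left; exact Hb|right; exists Y; assumption].
        -- destruct (FP X FX) as [[_ MPX] _].
           destruct (MPX a b (or_intror Xa) (or_intror (YX _ Yab))) as [Hb|Hb]; [left; exact Hb|right; exists X; assumption].
    + intros [X FX Xx]. exact (proj2 (FP X FX) Xx).
  - set (M := fun z => D z \/ A0 z).
    assert (nMx : ~ M x) by (intros [H|H]; auto).
    pose proof (cds_filt hk HA0c) as fM. fold M in fM.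
    destruct fM as [M1 [Mup [Mmeet Mc]]].
    exists M. split; [|split; [intros z Hz; left; exact Hz|exact nMx]].
    split; [exact HA0c|]. split; [exists x; exact nMx|].
    intros E HE HEp HME z Ez. apply NNPP; intro nMz.
    destruct (cds_filt hk HE) as [E1 [Eup [Emeet Ec]]].
    assert (key : forall u, Fx u -> ~ M u -> exists m, M m /\ le (meet u m) x).
    { intros u Fu nMu. apply NNPP; intro nG.
      pose (G := fun w => exists m, M m /\ le (meet u m) w).
      assert (fG : filt G).
      { split; [exists (one A); split; [exact M1|apply le_one]|].
        split; [intros a b [m [Hm Ha]] Hab; exists m; split; [exact Hm|eapply le_trans; eassumption]|].
        split.
        - intros a b [m [Hm Ha]] [m' [Hm' Hb]]. exists (meet m m'). split; [apply Mmeet; assumption|].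
          apply meet_glb; [eapply le_trans; [|exact Ha]|eapply le_trans; [|exact Hb]];
            apply le_meet_mono; (apply le_refl || apply meet_lb1 || apply meet_lb2).
        - intros a [m [Hm Ha]]. exists (cc m). split; [apply Mc, Hm|].
          rewrite <- (cc_fix hk Fu) at 1. eapply le_trans; [apply cc_meet|]. apply cc_mono, Ha. }
      assert (PG : P G).
      { split.
        - apply union_cds. apply filt_cds; [exact hk|exact fG].
          intros w Dw. exists w. split; [left; exact Dw|apply meet_lb2].
        - exact nG. }
      apply nMu. right. apply (HA0max G); [|exact PG|].
      + intros w Aw. exists w. split; [right; exact Aw|apply meet_lb2].
      + exists (one A). split; [exact M1|apply meet_lb1]. }
    set (b := cc z).
    assert (nMb : ~ M b) by (intro H; apply nMz; apply (Mup _ _ H); apply cc_le, hk).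
    destruct (key b (Fx_cc z) nMb) as [m1 [Hm1 Hle1]].
    assert (Mnb : M (neg b)).
    { apply NNPP; intro H. destruct (key (neg b) (Fx_neg (Fx_cc z)) H) as [m2 [Hm2 Hle2]].
      apply nMx. apply (Mup (meet m1 m2)); [apply Mmeet; assumption|].
      destruct (cc_comp z) as [Hj _]. fold b in Hj.
      apply le_trans with (y := meet (meet m1 m2) (join b (neg b))).
      - rewrite Hj, mO. apply le_refl.
      - rewrite mD. apply join_lub.
        + eapply le_trans; [|exact Hle1]. rewrite mC. apply le_meet_mono. apply le_refl. apply meet_lb1.
        + eapply le_trans; [|exact Hle2]. rewrite mC. apply le_meet_mono. apply le_refl. apply meet_lb2. }
    apply (filt_proper (conj E1 (conj Eup (conj Emeet Ec))) HEp).
    destruct (cc_comp z) as [_ Hz0]. fold b in Hz0. rewrite <- Hz0.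
    apply Emeet; [apply Ec, Ez|apply HME, Mnb].
Qed.

Lemma part_i : 1 <= k -> forall D : A -> Prop, cyclic_ds D ->
  exists F : (A -> Prop) -> Prop,
    (forall M, F M -> maximal_cds M) /\ (forall x, D x <-> (forall M, F M -> M x)).
Proof.
  intros hk D HD. exists (fun M => maximal_cds M /\ forall z, D z -> M z).
  split; [intros M [H _]; exact H|]. intro x. split.
  - intros Dx M [_ H]. apply H, Dx.
  - intro H. apply NNPP; intro nDx. destruct (extend hk x HD nDx) as [M [HM [HDM nMx]]].
    apply nMx, H. split; assumption.
Qed.

Lemma part_ii : 1 <= k -> forall x : A, (forall M, maximal_cds M -> M x) <-> x = one A.
Proof.
  intros hk x. split.
  - intro H. pose (D1 := fun z : A => z = one A).
    assert (HD : cyclic_ds D1).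
    { apply filt_cds; [exact hk|]. unfold D1. split; [reflexivity|]. split.
      - intros a b -> Hb. apply one_of_le, Hb.
      - split. intros a b -> ->. apply mO. intros a ->. apply cc_one. }
    destruct (part_i hk HD) as [F [HF1 HF2]]. apply (proj2 (HF2 x)).
    intros M HM. apply H, HF1, HM.
  - intros -> M [[H _] _]. exact H.
Qed.

Definition psi (M : A -> Prop) (x y : A) : Prop :=
  exists b, Fx b /\ M b /\ meet x b = meet y b.

Lemma weak1 x y b1 b2 : meet x b1 = meet y b1 -> meet x (meet b1 b2) = meet y (meet b1 b2).
Proof. intro H. rewrite !mA, H. reflexivity. Qed.
Lemma weak2 x y b1 b2 : meet x b2 = meet y b2 -> meet x (meet b1 b2) = meet y (meet b1 b2).
Proof. intro H. rewrite (mC _ b1 b2). apply weak1, H. Qed.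
Lemma meet_split x y b : meet (meet x y) b = meet (meet x b) (meet y b).
Proof. apply le_antisym.
  - apply meet_glb; apply le_meet_mono; (apply meet_lb1 || apply meet_lb2 || apply le_refl).
  - apply meet_glb; [apply le_meet_mono|]; (apply meet_lb1 || apply le_trans_meet1, meet_lb2).
Qed.

Lemma psi_cong (M : A -> Prop) : filt M -> congruence (psi M).
Proof.
  intros [M1 [Mup [Mm Mc]]].
  assert (Hb2 : forall x x' y y', psi M x x' -> psi M y y' ->
     exists B, Fx B /\ M B /\ meet x B = meet x' B /\ meet y B = meet y' B).
  { intros x x' y y' [b1 [F1 [Mb1 H1]]] [b2 [F2 [Mb2 H2]]]. exists (meet b1 b2).
    split; [apply Fx_meet; assumption|]. split; [apply Mm; assumption|].
    split; [apply weak1, H1|apply weak2, H2]. }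
  split; [intro x; exists (one A); split; [apply Fx_one|split; [exact M1|reflexivity]]|].
  split; [intros x y [b [Fb [Mb H]]]; exists b; auto|].
  split.
  { intros x y z Hxy Hyz. destruct (Hb2 _ _ _ _ Hxy Hyz) as [B [FB [MB [H1 H2]]]].
    exists B. split; [exact FB|split; [exact MB|]]. rewrite H1, H2. reflexivity. }
  split.
  { intros x x' y y' Hx Hy. destruct (Hb2 _ _ _ _ Hx Hy) as [B [FB [MB [H1 H2]]]].
    exists B. split; [exact FB|split; [exact MB|]]. rewrite (meet_split x y B), (meet_split x' y' B), H1, H2. reflexivity. }
  split.
  { intros x x' y y' Hx Hy. destruct (Hb2 _ _ _ _ Hx Hy) as [B [FB [MB [H1 H2]]]].
    exists B. split; [exact FB|split; [exact MB|]]. rewrite !meet_distr_r, H1, H2. reflexivity. }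
  split.
  { intros x x' [b [[Cb Tb] [Mb H]]]. exists b. split; [split; assumption|split; [exact Mb|]].
    rewrite (neg_comp_meet _ x b Cb), (neg_comp_meet _ x' b Cb), H. reflexivity. }
  split.
  { intros x x' [b [[Cb Tb] [Mb H]]]. exists b. split; [split; assumption|split; [exact Mb|]].
    rewrite (star_comp_meet _ x b Cb), (star_comp_meet _ x' b Cb), H. reflexivity. }
  { intros x x' [b [[Cb Tb] [Mb H]]]. exists b. split; [split; assumption|split; [exact Mb|]].
    rewrite <- Tb, <- !t_meet, H. reflexivity. }
Qed.

Lemma cong_cc (th : A -> A -> Prop) : congruence th -> forall x y, th x y -> th (cc x) (cc y).
Proof.
  intros [Hr [Hs [Ht [Hm [Hj [Hn [Hst Htt]]]]]]] x y H.
  assert (Hp : forall i, th (tpow i x) (tpow i y)).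
  { induction i; [exact H|]. rewrite !tpow_S. apply Htt, IHi. }
  unfold cc, cJ. apply Hn. induction (seq 1 k) as [|i l IH]; simpl; [apply Hr|].
  apply Hj; [|exact IH]. unfold nabla. apply Hn, Hm; [apply Hn, Hn, Hp|apply Hst, Hn, Hp].
Qed.

Lemma D_theta : 1 <= k -> forall th : A -> A -> Prop, congruence th -> cyclic_ds (fun z => th z (one A)).
Proof.
  intros hk th Hth. pose proof Hth as Hth'.
  destruct Hth' as [Hr [Hs [Ht [Hm [Hj [Hn [Hst Htt]]]]]]].
  apply filt_cds; [exact hk|]. split; [apply Hr|]. split.
  - intros x y Hx Hxy. rewrite <- (le_join_eq _ _ _ Hxy).
    apply Ht with (join (one A) y). apply Hj; [exact Hx|apply Hr].
    rewrite jC, join_one. apply Hr.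
  - split.
    + intros x y Hx Hy. pose proof (Hm _ _ _ _ Hx Hy) as H. rewrite mO in H. exact H.
    + intros x Hx. pose proof (cong_cc Hth _ _ Hx) as H. rewrite cc_one in H. exact H.
Qed.

Lemma K (th : A -> A -> Prop) : congruence th -> (forall z, th z (one A) -> z = one A) ->
  forall x y, th x y -> x = y.
Proof.
  intros Hth triv.
  destruct Hth as [Hr [Hs [Ht [Hm [Hj [Hn [Hst Htt]]]]]]].
  assert (L : forall x y, th x y -> le x y).
  { intros x y H. apply le_of_Dl.
    - apply comp_join_le; [apply comp_Dl|]. apply triv.
      assert (E : join (neg (Dl y)) y = one A) by (apply comp_le_join; [apply comp_Dl|apply Dl_le]).
      rewrite <- E. apply Hj; [|apply Hr]. unfold Dl. apply Hn, Hm; [exact H|apply Hst, Hn, H].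
    - apply neg_inj. rewrite neg_zero. apply triv.
      rewrite <- (neg_zero A), <- (star_meet _ y). apply Hn, Hm; [exact H|apply Hr]. }
  intros x y H. apply le_antisym; apply L; [exact H|apply Hs, H].
Qed.

Lemma sep : 1 <= k -> forall x y : A, x <> y -> exists M, maximal_cds M /\ ~ psi M x y.
Proof.
  intros hk x y nxy.
  pose (E := fun z => exists b, Fx b /\ le (neg b) z /\ meet x b = meet y b).
  assert (fE : filt E).
  { split; [exists (zero A); split; [apply Fx_zero|split; [apply le_one|rewrite !meet_zero; reflexivity]]|].
    split; [intros a b [c [Fc [Hc Hm]]] Hab; exists c; split; [exact Fc|split; [eapply le_trans; eassumption|exact Hm]]|].
    split.
    - intros a b [c1 [F1 [H1 E1]]] [c2 [F2 [H2 E2]]]. exists (join c1 c2).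
      split; [apply Fx_join; assumption|]. split.
      + rewrite nJ. apply le_meet_mono; assumption.
      + rewrite !mD, E1, E2. reflexivity.
    - intros a [c [Fc [Hc Hm]]]. exists c. split; [exact Fc|split; [|exact Hm]].
      rewrite <- (cc_fix hk (Fx_neg Fc)). apply cc_mono, Hc. }
  assert (nE0 : ~ E (zero A)).
  { intros [c [Fc [Hc Hm]]]. apply nxy. apply zero_of_le in Hc.
    assert (c = one A) by (rewrite <- (nI _ c), Hc; apply neg_zero).
    subst c. rewrite !mO in Hm. exact Hm. }
  destruct (extend hk (zero A) (filt_cds hk fE) nE0) as [M [HM [HEM nM0]]].
  exists M. split; [exact HM|]. intros [b [Fb [Mb Hb]]].
  destruct (cds_filt hk (proj1 HM)) as [_ [_ [Mm _]]].
  apply nM0. destruct Fb as [[Hc1 Hz] Tb] eqn:EFb. rewrite <- Hz. apply Mm; [exact Mb|].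
  apply HEM. exists b. split; [exact Fb|split; [apply le_refl|exact Hb]].
Qed.

Lemma part_iii : 1 <= k -> subdirectly_irreducible A -> simple A.
Proof.
  intros hk [a [b0 [ab Hab]]]. split; [exists a, b0; exact ab|].
  intros th Hth.
  destruct (classic (forall z, th z (one A) -> z = one A)) as [triv|ntriv].
  - left. apply K; assumption.
  - right. pose proof Hth as Hth'.
    destruct Hth' as [Hr [Hs [Ht [Hm [Hj [Hn [Hst Htt]]]]]]].
    assert (H01 : th (zero A) (one A)).
    { apply NNPP; intro n01.
      apply not_all_ex_not in ntriv. destruct ntriv as [z0 Hz0].
      apply imply_to_and in Hz0. destruct Hz0 as [Hz0 nz0].
      assert (HM0 : exists M0, maximal_cds M0 /\ forall x y, psi M0 x y -> x = y).
      { apply NNPP; intro Hno. apply ab. apply NNPP; intro ne.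
        destruct (sep hk ne) as [M [HM nps]]. apply nps. apply Hab.
        - apply psi_cong, cds_filt, (proj1 HM). exact hk.
        - apply NNPP; intro nn. apply Hno. exists M. split; [exact HM|].
          intros x y Hxy. apply NNPP; intro nxy. apply nn. exists x, y. split; assumption. }
      destruct HM0 as [M0 [[HM0c [HM0p HM0max]] Hid]].
      destruct (cds_filt hk HM0c) as [_ [_ [_ M0c]]].
      assert (M0one : forall z, M0 z -> z = one A).
      { intros z Hz. apply Hid. exists (cc z). split; [apply Fx_cc|split; [apply M0c, Hz|]].
        rewrite (mC _ (one A)), mO, mC. apply cc_le, hk. }
      apply nz0. apply M0one. apply (HM0max (fun z => th z (one A))).
      - apply D_theta; assumption.
      - exists (zero A). exact n01.
      - intros w Hw. rewrite (M0one w Hw). apply Hr.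
      - exact Hz0. }
    intros x y.
    assert (Z : forall w, th w (zero A)).
    { intro w. pose proof (Hm _ _ _ _ (Hr w) (Hs _ _ H01)) as H. rewrite mO, meet_zero in H. exact H. }
    apply Ht with (zero A); [apply Z|apply Hs, Z].
Qed.
End Ck2.

Theorem lemma3p3 (k : nat) (hk : 1 <= k) :
  (forall A : CkAlg k,
     (forall D : A -> Prop, cyclic_ds D ->
        exists F : (A -> Prop) -> Prop,
          (forall M, F M -> maximal_cds M) /\
          (forall x, D x <-> (forall M, F M -> M x))) /\
     (forall x : A, (forall M, maximal_cds M -> M x) <-> x = one A)) /\
  (forall A : CkAlg k, subdirectly_irreducible A -> simple A).
Proof.
  split.
  - intro A. split.
    + intros D HD. exact (part_i hk HD).
    + intro x. exact (part_ii A hk x).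
  - intros A H. exact (part_iii hk H).
Qed.
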